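(* Let $C=\mathbb{S}^1\times\mathbb{R}$ be the flat Euclidean cylinder, $\theta_0\in\mathbb{S}^1$, $v=\{\theta_0\}\times\mathbb{R}$, and let $f:C\to C$ be a geodesic-preserving bijection with $f(v)=v$, $f(\theta_0,0)=(\theta_0,0)$ and $f(\theta_0,1)=(\theta_0,1)$. Then $f$ maps vertical geodesics to vertical geodesics and slant geodesics to slant geodesics.
   Context: $C$ carries the product of the flat metric on $\mathbb{S}^1=\mathbb{R}/\mathbb{Z}$ and the standard metric on $\mathbb{R}$. A geodesic is the image of a locally isometric immersion of the whole real line; a bijection (not assumed continuous) is geodesic-preserving if it maps every geodesic onto a geodesic as a set. Vertical geodesics are the lines $\{\theta\}\times\mathbb{R}$, horizontal geodesics are the circles $\mathbb{S}^1\times\{r\}$, and slant geodesics are all other geodesics. *)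

(* Defs.v *)
From Stdlib Require Import Reals.
Open Scope R_scope.

(* S^1 = R/Z, represented by the canonical representatives in [0,1). *)
Definition S1 : Type := {x : R | 0 <= x < 1}.

Definition Cyl : Type := (S1 * R)%type.

(* Quotient (flat) distance on R/Z between representatives in [0,1). *)
Definition circ_dist (a b : R) : R := Rmin (Rabs (a - b)) (1 - Rabs (a - b)).

Definition cdist (p q : Cyl) : R :=
  sqrt (circ_dist (proj1_sig (fst p)) (proj1_sig (fst q)) ^ 2
        + (snd p - snd q) ^ 2).

Definition local_isometry (g : R -> Cyl) : Prop :=
  forall t : R, exists eps : R, 0 < eps /\
    forall s s' : R, Rabs (s - t) < eps -> Rabs (s' - t) < eps ->
      cdist (g s) (g s') = Rabs (s - s').

Definition geodesic (G : Cyl -> Prop) : Prop :=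
  exists g : R -> Cyl, local_isometry g /\ forall p, G p <-> exists t, g t = p.

Definition vertical (G : Cyl -> Prop) : Prop :=
  exists th : S1, forall p : Cyl, G p <-> fst p = th.

Definition horizontal (G : Cyl -> Prop) : Prop :=
  exists r : R, forall p : Cyl, G p <-> snd p = r.

Definition slant (G : Cyl -> Prop) : Prop :=
  geodesic G /\ ~ vertical G /\ ~ horizontal G.

Definition image (f : Cyl -> Cyl) (G : Cyl -> Prop) : Cyl -> Prop :=
  fun q => exists p, G p /\ f p = q.

Definition bijective_map (f : Cyl -> Cyl) : Prop :=
  (forall x y, f x = f y -> x = y) /\ (forall y, exists x, f x = y).

(* Bijection (not assumed continuous) mapping every geodesic onto a geodesic. *)
Definition geodesic_preserving (f : Cyl -> Cyl) : Prop :=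
  bijective_map f /\ forall G, geodesic G -> geodesic (image f G).

(* Main.v *)
Require Import Defs.
From Stdlib Require Import Reals Lra Lia ZArith ClassicalEpsilon ProofIrrelevance Classical.
Open Scope R_scope.

Ltac crush := unfold Rmin, Rabs in *;
  repeat match goal with
  | |- context[Rcase_abs ?x] => destruct (Rcase_abs x)
  | H: context[Rcase_abs ?x] |- _ => destruct (Rcase_abs x)
  end;
  repeat match goal with
  | |- context[Rle_dec ?x ?y] => destruct (Rle_dec x y)
  | H: context[Rle_dec ?x ?y] |- _ => destruct (Rle_dec x y)
  end; lra.

Definition Xc (p : Cyl) : R := proj1_sig (fst p).
Lemma Xc_bd p : 0 <= Xc p < 1.
Proof. exact (proj2_sig (fst p)). Qed.

Lemma S1_eq (p q : S1) : proj1_sig p = proj1_sig q -> p = q.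
Proof. destruct p as [x Hx], q as [y Hy]; simpl; intro E; subst; f_equal; apply proof_irrelevance. Qed.

Lemma Cyl_eq (p q : Cyl) : Xc p = Xc q -> snd p = snd q -> p = q.
Proof. destruct p, q; unfold Xc; simpl; intros; f_equal; auto; apply S1_eq; auto. Qed.

Lemma iso_sq p q B : cdist p q = B ->
  circ_dist (Xc p) (Xc q) ^ 2 + (snd p - snd q) ^ 2 = B ^ 2.
Proof.
  unfold cdist; intro H; rewrite <- H; rewrite pow2_sqrt; [reflexivity|].
  apply Rplus_le_le_0_compat; apply pow2_ge_0.
Qed.

Lemma cd_nonneg a b : 0 <= a < 1 -> 0 <= b < 1 -> 0 <= circ_dist a b.
Proof. intros; unfold circ_dist; crush. Qed.

Lemma Z_small k : -1 < IZR k < 1 -> k = 0%Z.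
Proof. intros [H1 H2]. apply lt_IZR in H2. assert (IZR (-1) < IZR k) by lra. apply lt_IZR in H. lia. Qed.

Lemma cd_lemma a b d k : 0 <= a < 1 -> 0 <= b < 1 -> Rabs d < 1/2 ->
  a - b = d + IZR k -> circ_dist a b = Rabs d.
Proof.
  intros Ha Hb Hd E.
  assert (IZR (-2) < IZR k) by crush. assert (IZR k < IZR 2) by crush.
  apply lt_IZR in H; apply lt_IZR in H0.
  assert (k = (-1)%Z \/ k = 0%Z \/ k = 1%Z) as [-> | [-> | ->]] by lia;
  unfold circ_dist; simpl in E; crush.
Qed.

Lemma cd_small a b : 0 <= a < 1 -> 0 <= b < 1 -> circ_dist a b < 1/4 ->
  exists d k, a - b = d + IZR k /\ Rabs d < 1/4.
Proof.
  intros Ha Hb H. unfold circ_dist in H.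
  destruct (Rlt_dec (Rabs (a-b)) (1/2)).
  - exists (a-b), 0%Z; split; [simpl; lra| crush].
  - destruct (Rle_dec 0 (a-b)).
    + exists (a-b-1), 1%Z; split; [simpl; lra| crush].
    + exists (a-b+1), (-1)%Z; split; [simpl; lra| crush].
Qed.

Lemma alg d w d1 w1 tau h : h <> 0 -> d^2+w^2 = tau^2 -> d1^2+w1^2 = h^2 ->
  (d-d1)^2+(w-w1)^2 = (tau-h)^2 -> d = d1/h*tau /\ w = w1/h*tau.
Proof.
  intros Hh H1 H2 H3.
  assert (E : d*d1 + w*w1 = tau*h) by nra.
  assert (Z : Rsqr (d - d1/h*tau) + Rsqr (w - w1/h*tau) = 0).
  { unfold Rsqr.
    replace ((d - d1/h*tau)*(d - d1/h*tau) + (w - w1/h*tau)*(w - w1/h*tau))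
      with ((d^2+w^2) - 2*(tau/h)*(d*d1+w*w1) + (tau/h)^2*(d1^2+w1^2)) by (field; auto).
    rewrite H1, E, H2. field; auto. }
  apply Rplus_sqr_eq_0 in Z. lra.
Qed.
Lemma loc g : local_isometry g -> forall t, exists e a b, 0 < e /\ a^2+b^2 = 1 /\
  forall s, Rabs (s - t) < e -> snd (g s) = snd (g t) + b*(s-t) /\
     exists n, Xc (g s) = Xc (g t) + a*(s-t) + IZR n.
Proof.
  intros Hg t. destruct (Hg t) as [eps [Heps Hiso]].
  set (e := Rmin eps (1/4)).
  assert (He : 0 < e) by (unfold e; crush).
  assert (He1 : e <= eps) by (unfold e; crush).
  assert (He2 : e <= 1/4) by (unfold e; crush).
  assert (Hnear : forall s, Rabs (s-t) < e -> exists d k,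
     Xc (g s) - Xc (g t) = d + IZR k /\ Rabs d < 1/4 /\
     d^2 + (snd (g s) - snd (g t))^2 = (s-t)^2).
  { intros s Hs.
    assert (Ht0 : Rabs (t - t) < eps) by (rewrite Rminus_diag, Rabs_R0; lra).
    pose proof (iso_sq _ _ _ (Hiso s t ltac:(lra) Ht0)) as H.
    pose proof (cd_nonneg _ _ (Xc_bd (g s)) (Xc_bd (g t))).
    pose proof (Rabs_pos (s - t)).
    assert (Hc : circ_dist (Xc (g s)) (Xc (g t)) < 1/4).
    { pose proof (pow2_ge_0 (snd (g s) - snd (g t))). nra. }
    destruct (cd_small _ _ (Xc_bd (g s)) (Xc_bd (g t)) Hc) as [d [k [E Hd]]].
    exists d, k. split; [exact E|]. split; [exact Hd|].
    rewrite (cd_lemma _ _ d k (Xc_bd (g s)) (Xc_bd (g t))) in H; [|lra|exact E].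
    rewrite !pow2_abs in H. exact H. }
  set (h := e/2). set (s1 := t + h).
  assert (Hs1 : Rabs (s1 - t) < e) by (unfold s1, h; crush).
  destruct (Hnear s1 Hs1) as [d1 [k1 [Hd1 [Hb1 Hq1]]]].
  assert (Hh : h <> 0) by (unfold h; lra).
  assert (Hst : s1 - t = h) by (unfold s1; ring).
  rewrite Hst in Hq1.
  exists e, (d1/h), ((snd (g s1) - snd (g t))/h).
  split; [exact He|]. split.
  { replace ((d1 / h) ^ 2 + ((snd (g s1) - snd (g t)) / h) ^ 2)
      with ((d1^2 + (snd (g s1) - snd (g t))^2)/h^2) by (field; auto).
    rewrite Hq1. field; auto. }
  intros s Hs. destruct (Hnear s Hs) as [d [k [Hd [Hb Hq]]]].
  assert (Hcr : Rabs (s - s1) = Rabs (s - s1)) by reflexivity.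
  pose proof (iso_sq _ _ _ (Hiso s s1 ltac:(lra) ltac:(lra))) as H.
  rewrite (cd_lemma _ _ (d - d1) (k - k1) (Xc_bd (g s)) (Xc_bd (g s1))) in H;
    [| crush | rewrite minus_IZR; lra].
  rewrite !pow2_abs in H.
  destruct (alg d (snd (g s) - snd (g t)) d1 (snd (g s1) - snd (g t)) (s - t) h Hh Hq Hq1)
    as [A1 A2].
  { replace (d - d1) with (d - d1) by ring.
    replace (snd (g s) - snd (g t) - (snd (g s1) - snd (g t))) with (snd (g s) - snd (g s1)) by ring.
    replace (s - t - h) with (s - s1) by (unfold s1; ring). exact H. }
  split.
  - lra.
  - exists k. lra.
Qed.
Definition Ploc (g : R -> Cyl) t e a b := 0 < e /\ a^2+b^2 = 1 /\
  forall s, Rabs (s - t) < e -> snd (g s) = snd (g t) + b*(s-t) /\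
     exists n, Xc (g s) = Xc (g t) + a*(s-t) + IZR n.

Lemma unq g t1 e1 a1 b1 t2 e2 a2 b2 : Ploc g t1 e1 a1 b1 -> Ploc g t2 e2 a2 b2 ->
  Rabs (t2 - t1) < e1 -> a1 = a2 /\ b1 = b2.
Proof.
  intros [He1 [N1 H1]] [He2 [N2 H2]] Hd.
  set (r := Rmin e2 (e1 - Rabs (t2 - t1))).
  set (rho := Rmin (r/2) (1/8)).
  assert (Hr : 0 < r) by (unfold r; crush).
  assert (Hrho : 0 < rho <= 1/8) by (unfold rho; crush).
  assert (Hrr : rho < r) by (unfold rho; crush).
  set (s := t2 + rho).
  assert (Hs1 : Rabs (s - t1) < e1) by (unfold s, r in *; crush).
  assert (Hs2 : Rabs (s - t2) < e2) by (unfold s, r in *; crush).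
  destruct (H1 s Hs1) as [Y1 [n1 X1]].
  destruct (H1 t2 Hd) as [Y1' [n1' X1']].
  destruct (H2 s Hs2) as [Y2 [n2 X2]].
  assert (Hb : (b1 - b2) * rho = 0) by (unfold s in *; nra).
  assert (Ha : (a1 - a2) * rho = IZR (n2 + n1' - n1)).
  { rewrite minus_IZR, plus_IZR. unfold s in *. nra. }
  assert (-1 <= a1 <= 1) by nra. assert (-1 <= a2 <= 1) by nra.
  assert (Hk : (n2 + n1' - n1)%Z = 0%Z) by (apply Z_small; rewrite <- Ha; nra).
  rewrite Hk in Ha. simpl in Ha.
  split; nra.
Qed.

Lemma lc_cont (k : R -> R) : (forall t, exists e, 0 < e /\ forall s, Rabs (s - t) < e -> k s = k t) ->
  continuity k.
Proof.
  intros H x. unfold continuity_pt, continue_in, limit1_in, limit_in.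
  intros eps Heps. destruct (H x) as [e [He Hs]]. exists e. split; [lra|].
  intros s [_ Hd]. simpl in *. unfold R_dist in *. rewrite Hs by exact Hd.
  rewrite Rminus_diag, Rabs_R0. lra.
Qed.

Lemma LC (T : Type) (h : R -> T) :
  (forall t, exists e, 0 < e /\ forall s, Rabs (s - t) < e -> h s = h t) ->
  forall t, h t = h 0.
Proof.
  intros H t. destruct (classic (h t = h 0)) as [E|NE]; [exact E|exfalso].
  set (k := fun s => if excluded_middle_informative (h s = h 0) then 0 else 1).
  assert (Hk : forall t, exists e, 0 < e /\ forall s, Rabs (s - t) < e -> k s = k t).
  { intro x. destruct (H x) as [e [He Hs]]. exists e. split; auto.
    intros s Hd. unfold k. rewrite (Hs s Hd). reflexivity. }
  assert (k0 : k 0 = 0) by (unfold k; destruct excluded_middle_informative; tauto).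
  assert (kt : k t = 1) by (unfold k; destruct excluded_middle_informative; tauto).
  assert (kv : forall z, k z = 0 \/ k z = 1) by (intro z; unfold k; destruct excluded_middle_informative; auto).
  destruct (Rtotal_order 0 t) as [Hlt|[Heq|Hgt]].
  - assert (C : continuity (fun s => k s - 1/2)).
    { apply lc_cont. intro x. destruct (Hk x) as [e [He Hs]]. exists e; split; auto.
      intros s Hd; rewrite (Hs s Hd); reflexivity. }
    destruct (IVT _ 0 t C Hlt ltac:(lra) ltac:(lra)) as [z [_ Hz]].
    destruct (kv z); lra.
  - subst. apply NE. reflexivity.
  - assert (C : continuity (fun s => 1/2 - k s)).
    { apply lc_cont. intro x. destruct (Hk x) as [e [He Hs]]. exists e; split; auto.
      intros s Hd; rewrite (Hs s Hd); reflexivity. }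
    destruct (IVT _ t 0 C Hgt ltac:(lra) ltac:(lra)) as [z [_ Hz]].
    destruct (kv z); lra.
Qed.

Definition fl (z : R) : Z := (up z - 1)%Z.

Lemma fl_shift z n : fl (z + IZR n) = (fl z + n)%Z.
Proof.
  unfold fl. destruct (archimed z) as [A1 A2].
  assert (E : (up z + n)%Z = up (z + IZR n)).
  { apply tech_up; rewrite plus_IZR; lra. }
  rewrite <- E. lia.
Qed.

Lemma global g : local_isometry g -> exists a b, a^2+b^2 = 1 /\
  forall t, snd (g t) = snd (g 0) + b*t /\ exists n, Xc (g t) = Xc (g 0) + a*t + IZR n.
Proof.
  intro Hg. pose proof (loc g Hg) as L.
  assert (L' : forall t, exists q : R*R*R, Ploc g t (fst (fst q)) (snd (fst q)) (snd q)).
  { intro t. destruct (L t) as [e [a [b H]]]. exists (e,a,b). exact H. }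
  set (F := fun t => proj1_sig (constructive_indefinite_description _ (L' t))).
  assert (HF : forall t, Ploc g t (fst (fst (F t))) (snd (fst (F t))) (snd (F t))).
  { intro t. unfold F. destruct constructive_indefinite_description. simpl. exact p. }
  assert (Hab : forall t, (snd (fst (F t)), snd (F t)) = (snd (fst (F 0)), snd (F 0))).
  { apply (LC _ (fun t => (snd (fst (F t)), snd (F t)))).
    intro t. exists (fst (fst (F t))). split; [apply (HF t)|].
    intros s Hs. destruct (unq g _ _ _ _ _ _ _ _ (HF t) (HF s) Hs) as [E1 E2].
    rewrite E1, E2. reflexivity. }
  set (a := snd (fst (F 0))). set (b := snd (F 0)).
  assert (Ha : forall t, snd (fst (F t)) = a) by (intro t; pose proof (Hab t) as E; inversion E; auto).
  assert (Hb : forall t, snd (F t) = b) by (intro t; pose proof (Hab t) as E; inversion E; auto).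
  exists a, b. split; [apply (HF 0)|].
  intro t. split.
  - pose proof (LC _ (fun t => snd (g t) - b * t)) as Y.
    simpl in Y. enough (Yt : snd (g t) - b * t = snd (g 0) - b * 0) by lra. apply Y.
    intro x. exists (fst (fst (F x))). pose proof (HF x) as [He [_ Hs]]. split; auto.
    intros s Hd. destruct (Hs s Hd) as [E _]. rewrite Hb in E. rewrite E. ring.
  - pose proof (LC _ (fun t => Xc (g t) - a * t - IZR (fl (Xc (g t) - a * t)))) as Y.
    simpl in Y. exists (Z.sub (fl (Xc (g t) - a * t)) (fl (Xc (g 0) - a * 0))). rewrite minus_IZR.
    enough (Yt : Xc (g t) - a * t - IZR (fl (Xc (g t) - a * t)) = Xc (g 0) - a * 0 - IZR (fl (Xc (g 0) - a * 0))) by lra.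
    apply Y.
    intro x. exists (fst (fst (F x))). pose proof (HF x) as [He [_ Hs]]. split; auto.
    intros s Hd. destruct (Hs s Hd) as [_ [n E]]. rewrite Ha in E. rewrite E.
    replace (Xc (g x) + a * (s - x) + IZR n - a * s) with ((Xc (g x) - a * x) + IZR n) by ring.
    rewrite fl_shift, plus_IZR. ring.
Qed.
Lemma hit g a b : a <> 0 -> (forall t, snd (g t) = snd (g 0) + b*t /\
   exists n, Xc (g t) = Xc (g 0) + a*t + IZR n) ->
  forall c k, 0 <= c < 1 -> Xc (g ((c + IZR k - Xc (g 0))/a)) = c.
Proof.
  intros Ha H c k Hc. set (t := (c + IZR k - Xc (g 0))/a).
  destruct (H t) as [_ [n E]].
  assert (Et : a * t = c + IZR k - Xc (g 0)) by (unfold t; field; auto).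
  rewrite Et in E. pose proof (Xc_bd (g t)).
  assert (Z : (k + n)%Z = 0%Z) by (apply Z_small; rewrite plus_IZR; lra).
  assert (IZR (k + n) = 0) by (rewrite Z; reflexivity). rewrite plus_IZR in H1. lra.
Qed.

Lemma vert_of g G a b : (forall p, G p <-> exists t, g t = p) -> a^2+b^2 = 1 -> a = 0 ->
  (forall t, snd (g t) = snd (g 0) + b*t /\ exists n, Xc (g t) = Xc (g 0) + a*t + IZR n) ->
  vertical G.
Proof.
  intros HG N A0 H. subst a.
  assert (Hx : forall t, fst (g t) = fst (g 0)).
  { intro t. apply S1_eq. destruct (H t) as [_ [n E]].
    pose proof (Xc_bd (g t)). pose proof (Xc_bd (g 0)).
    assert (n = 0%Z) by (apply Z_small; lra). subst n. unfold Xc in E. simpl in E. lra. }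
  assert (Hb : b <> 0) by (intro; subst; lra).
  exists (fst (g 0)). intro p. rewrite HG. split.
  - intros [t <-]. apply Hx.
  - intro Hp. exists ((snd p - snd (g 0))/b).
    apply Cyl_eq. unfold Xc. rewrite Hx, Hp. reflexivity.
    destruct (H ((snd p - snd (g 0))/b)) as [E _]. rewrite E. field. auto.
Qed.

Lemma CL1 G (th0 : S1) : geodesic G -> (forall q, G q -> fst q <> th0) -> vertical G.
Proof.
  intros [g [Hg HG]] Hd. destruct (global g Hg) as [a [b [N H]]].
  destruct (Req_dec a 0) as [A0|A0].
  - exact (vert_of g G a b HG N A0 H).
  - exfalso. pose proof (hit g a b A0 H (proj1_sig th0) 0 (proj2_sig th0)) as E.
    apply (Hd (g ((proj1_sig th0 + IZR 0 - Xc (g 0)) / a))).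
    + apply HG. eexists; reflexivity.
    + apply S1_eq. exact E.
Qed.

Lemma CL2 G (th0 : S1) : geodesic G -> ~ vertical G -> ~ horizontal G ->
  exists p1 p2, G p1 /\ G p2 /\ fst p1 = th0 /\ fst p2 = th0 /\ p1 <> p2.
Proof.
  intros [g [Hg HG]] NV NH. destruct (global g Hg) as [a [b [N H]]].
  destruct (Req_dec a 0) as [A0|A0].
  { exfalso. exact (NV (vert_of g G a b HG N A0 H)). }
  destruct (Req_dec b 0) as [B0|B0].
  { exfalso. apply NH. exists (snd (g 0)). intro p. rewrite HG. split.
    - intros [t <-]. destruct (H t) as [E _]. rewrite E, B0. ring.
    - intro Hp. exists ((Xc p + IZR 0 - Xc (g 0))/a). apply Cyl_eq.
      + apply (hit g a b A0 H). apply Xc_bd.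
      + destruct (H ((Xc p + IZR 0 - Xc (g 0))/a)) as [E _]. rewrite E, B0, Hp. ring. }
  set (c := proj1_sig th0). pose proof (proj2_sig th0) as Hc. fold c in Hc.
  set (t1 := (c + IZR 0 - Xc (g 0))/a). set (t2 := (c + IZR 1 - Xc (g 0))/a).
  exists (g t1), (g t2). repeat split.
  - apply HG; eexists; reflexivity.
  - apply HG; eexists; reflexivity.
  - apply S1_eq. exact (hit g a b A0 H c 0 Hc).
  - apply S1_eq. exact (hit g a b A0 H c 1 Hc).
  - intro E. assert (E2 : snd (g t1) = snd (g t2)) by (rewrite E; reflexivity).
    destruct (H t1) as [Y1 _]. destruct (H t2) as [Y2 _].
    rewrite Y1, Y2 in E2.
    assert (t1 = t2) by (apply Rmult_eq_reg_l with b; auto; lra).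
    unfold t1, t2 in H0. simpl in H0.
    assert (c + 0 - Xc (g 0) = c + 1 - Xc (g 0)).
    { apply Rmult_eq_reg_r with (/a). exact H0. apply Rinv_neq_0_compat; auto. }
    lra.
Qed.

Lemma vert_geo G : vertical G -> geodesic G.
Proof.
  intros [th Hth]. exists (fun t => (th, t)). split.
  - intro t. exists 1. split; [lra|]. intros s s' _ _.
    unfold cdist, circ_dist. simpl. rewrite Rminus_diag, Rabs_R0.
    unfold Rmin. destruct Rle_dec; [|lra].
    rewrite <- sqrt_Rsqr_abs. f_equal. unfold Rsqr; ring.
  - intro p. rewrite Hth. split.
    + intro E. exists (snd p). destruct p; simpl in *; subst; reflexivity.
    + intros [t <-]. reflexivity.
Qed.

Theorem lemma4p3 (f : Cyl -> Cyl) (th0 : S1) :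
  geodesic_preserving f ->
  (forall q : Cyl, image f (fun p : Cyl => fst p = th0) q <-> fst q = th0) ->
  f (th0, 0) = (th0, 0) ->
  f (th0, 1) = (th0, 1) ->
  (forall G : Cyl -> Prop, vertical G -> vertical (image f G)) /\
  (forall G : Cyl -> Prop, slant G -> slant (image f G)).
Proof.
  intros [[Inj Sur] Geo] Hv _ _. split.
  - intros G HV. pose proof (Geo G (vert_geo G HV)) as GG.
    destruct HV as [th Hth].
    destruct (classic (th = th0)) as [E|NE].
    + subst th. exists th0. intro q. rewrite <- Hv. unfold image.
      split; intros [p [Hp Ep]]; exists p; split; auto; apply Hth; auto.
    + apply (CL1 _ th0 GG). intros q [p [Hp Ep]] Fq.
      assert (Iq : image f (fun p => fst p = th0) q) by (apply Hv; auto).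
      destruct Iq as [p' [Hp' Ep']]. rewrite <- Ep in Ep'. apply Inj in Ep'. subst p'.
      apply Hth in Hp. congruence.
  - intros G [GG [NV NH]].
    destruct (CL2 G th0 GG NV NH) as [p1 [p2 [G1 [G2 [F1 [F2 D]]]]]].
    assert (I1 : fst (f p1) = th0) by (apply Hv; exists p1; auto).
    assert (I2 : fst (f p2) = th0) by (apply Hv; exists p2; auto).
    split; [apply Geo; auto|]. split.
    + intros [th Hth].
      assert (th = th0) by (rewrite <- I1; symmetry; apply Hth; exists p1; auto). subst th.
      apply NV. exists th0. intro p. split.
      * intro Hp. assert (Iq : image f (fun p => fst p = th0) (f p)).
        { apply Hv. apply Hth. exists p; auto. }
        destruct Iq as [p' [Hp' Ep']]. apply Inj in Ep'. subst; auto.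
      * intro Hp. assert (Iq : image f G (f p)).
        { apply Hth. apply Hv. exists p; auto. }
        destruct Iq as [p' [Hp' Ep']]. apply Inj in Ep'. subst; auto.
    + intros [r Hr].
      assert (R1 : snd (f p1) = r) by (apply Hr; exists p1; auto).
      assert (R2 : snd (f p2) = r) by (apply Hr; exists p2; auto).
      apply D. apply Inj. apply Cyl_eq.
      * unfold Xc. rewrite I1, I2. reflexivity.
      * congruence.
Qed.
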